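(* Let $n\in\mathbb{N}$ and let $f_t:[0,1]^n\to\mathbb{R}$ be differentiable, convex and bounded on $[0,1]^n$ with $\|\nabla f_t(\mathbf{x})\|_2\le L_2$ for all $\mathbf{x}\in[0,1]^n$, where $L_2\in(0,\infty)$. Let $\mathbf{x}_t\in[0,1]^n$ and let the binary decision $\hat{\mathbf{x}}_t=\mathcal{R}(\mathbf{x}_t)$ be computed by \texttt{bOGD} (described in the context). Then \[ \mathbb{E}\big[|f_t(\hat{\mathbf{x}}_t)-f_t(\mathbf{x}_t)|\big]\le \frac{L_2\sqrt{n}}{2}. \]
   Context: \texttt{bOGD} (binary online gradient descent) for a sequence of losses $f_1,f_2,\dots$ on $[0,1]^n$, with step size $\eta>0$ and $\lambda\ge0$: choose $\mathbf{x}_1\in[0,1]^n$; for each round $t$, implement $\hat{\mathbf{x}}_t=\mathcal{R}(\mathbf{x}_t)$, then observe $f_t$ and set $\mathbf{x}_{t+1}=\arg\min_{\mathbf{x}\in[0,1]^n}\ \eta\nabla f_t(\mathbf{x}_t)^\top\mathbf{x}+\tfrac12\|\mathbf{x}-\mathbf{x}_t\|_2^2+\eta\lambda\|\mathbf{x}\|_1$. The randomization map $\mathcal{R}:[0,1]^n\to\{0,1\}^n$ returns a random vector whose $i$-th entry is a Bernoulli random variable with success probability $\mathbf{x}_t(i)$, so that $\mathbb{E}[\mathcal{R}(\mathbf{x}_t)]=\mathbf{x}_t$. *)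

(* Defs.v *)
From HB Require Import structures.
From mathcomp Require Import all_boot all_order all_algebra.
From mathcomp Require Import all_classical all_reals all_analysis.
Set Implicit Arguments. Unset Strict Implicit. Unset Printing Implicit Defensive.
Import Order.TTheory GRing.Theory Num.Theory.
Import numFieldNormedType.Exports.
Local Open Scope ring_scope.

Definition in_box {R : realType} {n : nat} (x : 'rV[R]_n) : Prop :=
  forall i : 'I_n, 0 <= x ord0 i <= 1.

Definition convex_on_box {R : realType} {n : nat} (f : 'rV[R]_n -> R) : Prop :=
  forall x y : 'rV[R]_n, in_box x -> in_box y -> forall t : R, 0 <= t <= 1 ->
    f ((1 - t) *: x + t *: y) <= (1 - t) * f x + t * f y.

Definition bounded_on_box {R : realType} {n : nat} (f : 'rV[R]_n -> R) : Prop :=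
  exists M : R, forall x, in_box x -> `|f x| <= M.

Definition basis_vec {R : realType} {n : nat} (i : 'I_n) : 'rV[R]_n :=
  \row_(j < n) (i == j)%:R.

Definition grad {R : realType} {n : nat} (f : 'rV[R]_n -> R) (x : 'rV[R]_n)
  : 'rV[R]_n := \row_(i < n) ('d f x (basis_vec i)).

Definition norm2 {R : realType} {n : nat} (v : 'rV[R]_n) : R :=
  Num.sqrt (\sum_(i < n) (v ord0 i) ^+ 2).

(* The randomization map R(x): a random vector in {0,1}^n with independent
   Bernoulli(x i) coordinates. *)
Definition bern_prob {R : realType} {n : nat} (x : 'rV[R]_n)
  (b : {ffun 'I_n -> bool}) : R :=
  \prod_(i < n) (if b i then x ord0 i else 1 - x ord0 i).

Definition outcome_vec {R : realType} {n : nat} (b : {ffun 'I_n -> bool})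
  : 'rV[R]_n := \row_(i < n) (b i)%:R.

Definition expect_R {R : realType} {n : nat} (x : 'rV[R]_n)
  (g : 'rV[R]_n -> R) : R :=
  \sum_(b : {ffun 'I_n -> bool}) bern_prob x b * g (outcome_vec b).

(* Main.v *)
Require Import Defs.
From HB Require Import structures.
From mathcomp Require Import all_boot all_order all_algebra.
From mathcomp Require Import all_classical all_reals all_analysis.
From mathcomp Require Import ring lra.
Import Order.TTheory GRing.Theory Num.Theory.
Import numFieldNormedType.Exports.
Set Implicit Arguments. Unset Strict Implicit.
Local Open Scope classical_set_scope.
Local Open Scope ring_scope.

Lemma vec_decomp (R : realType) (n : nat) (v : 'rV[R]_n) :
  v = \sum_(i < n) v ord0 i *: basis_vec i.
Proof.
apply/rowP => j; rewrite summxE (bigD1 j) //= big1 => [|i /negbTE ij];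
  rewrite !mxE ?eqxx ?mulr1 ?addr0 //.
by rewrite ij mulr0.
Qed.

Lemma diff_grad (R : realType) (n : nat) (f : 'rV[R]_n -> R) y v :
  'd f y v = \sum_(i < n) v ord0 i * grad f y ord0 i.
Proof.
rewrite {1}(@vec_decomp _ _ v) linear_sum; apply: eq_bigr => i _.
by rewrite linearZ /= mxE.
Qed.

Lemma amgm (R : realType) (a g t : R) : 0 < t -> a * g <= (t * a ^+ 2 + g ^+ 2 / t) / 2.
Proof.
move=> t0.
have u0 : 0 < t^-1 by rewrite invr_gt0.
have tu : t * t^-1 = 1 by rewrite mulfV // gt_eqF.
have := mulr_ge0 (sqr_ge0 (t * a - g)) (ltW u0).
set u := t^-1 in u0 tu *.
move=> h.
have e : (t * a - g) ^+ 2 * u = t * a ^+2 * (t * u) - 2 * a * g * (t * u) + g ^+ 2 * u by ring.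
rewrite e tu in h. lra.
Qed.
Lemma grad_ineq (R : realType) (n : nat) (f : 'rV[R]_n -> R) (y z : 'rV[R]_n) :
  differentiable f y -> convex_on_box f -> in_box y -> in_box z ->
  'd f y (z - y) <= f z - f y.
Proof.
move=> df cf yb zb.
set v := z - y.
have dv : derivable f y v by exact: diff_derivable.
rewrite -deriveE //.
have H := derivableP dv.
have cv : (fun h : R => h^-1 *: ((f \o shift y) (h *: v) - f y)) @ 0^' --> 'D_v f y.
  exact: dv.
have cv' : (fun h : R => h^-1 *: ((f \o shift y) (h *: v) - f y)) @ 0^'+ --> 'D_v f y.
  move=> A /cv /nbhs_ballP [_ /posnumP[e] xe_A].
  by exists e%:num => //= h he h0; apply: xe_A => //; rewrite gt_eqF.
apply: (cvgr_to_le cv').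
exists 1 => //= h /= h1 h0.
have hle : h <= 1 by move: h1; rewrite sub0r normrN gtr0_norm // => /ltW.
have e : h *: v + y = (1 - h) *: y + h *: z.
  by rewrite /v scalerBr scalerBl scale1r -addrA addrC [- _ + y]addrC.
rewrite e.
have := cf y z yb zb h; rewrite (ltW h0) hle => /(_ isT) c.
rewrite [X in X <= _](_ : _ = h^-1 * (f ((1 - h) *: y + h *: z) - f y)) //.
rewrite ler_pdivrMl //.
lra.
Qed.
Lemma bern_marg (R : realType) (n : nat) (x : 'rV[R]_n) (i : 'I_n) (g : bool -> R) :
  \sum_(b : {ffun 'I_n -> bool}) bern_prob x b * g (b i) =
  x ord0 i * g true + (1 - x ord0 i) * g false.
Proof.
pose F := fun (j : 'I_n) (c : bool) =>
  (if c then x ord0 j else 1 - x ord0 j) * (if j == i then g c else 1).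
transitivity (\sum_(b : {ffun 'I_n -> bool}) \prod_(j < n) F j (b j)).
  apply: eq_bigr => b _; rewrite /F big_split /= /bern_prob; congr (_ * _).
  by rewrite (bigD1 i) //= eqxx big1 ?mulr1 // => j /negbTE ->.
rewrite -bigA_distr_bigA /= (bigD1 i) //= [X in _ * X]big1 ?mulr1.
  by rewrite big_bool /F /= eqxx.
by move=> j /negbTE ji; rewrite big_bool /F /= ji !mulr1 addrC subrK.
Qed.

Lemma bern_sum1 (R : realType) (n : nat) (x : 'rV[R]_n) :
  \sum_(b : {ffun 'I_n -> bool}) bern_prob x b = 1.
Proof.
rewrite /bern_prob -(bigA_distr_bigA (fun j c => if c then x ord0 j else 1 - x ord0 j)) /=.
by rewrite big1 // => j _; rewrite big_bool /= addrC subrK.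
Qed.

Lemma bern_ge0 (R : realType) (n : nat) (x : 'rV[R]_n) b :
  in_box x -> 0 <= bern_prob x b.
Proof.
move=> hx; apply: prodr_ge0 => i _; have /andP[h0 h1] := hx i.
by case: (b i) => //; rewrite subr_ge0.
Qed.

Lemma outcome_box (R : realType) (n : nat) (b : {ffun 'I_n -> bool}) :
  in_box (outcome_vec b : 'rV[R]_n).
Proof. by move=> i; rewrite mxE; case: (b i) => /=; rewrite ?lexx ?ler01. Qed.

Lemma var_bound (R : realType) (n : nat) (x : 'rV[R]_n) : in_box x ->
  \sum_(b : {ffun 'I_n -> bool}) bern_prob x b *
     \sum_(i < n) ((outcome_vec b : 'rV[R]_n) ord0 i - x ord0 i) ^+ 2 <= n%:R / 4.
Proof.
move=> hx.
rewrite (eq_bigr (fun b => \sum_(i < n) bern_prob x b * ((outcome_vec b : 'rV[R]_n) ord0 i - x ord0 i) ^+ 2)); last by move=> b _; rewrite mulr_sumr.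
rewrite exchange_big /=.
have -> : n%:R / 4 = \sum_(i < n) (1 / 4 : R).
  by rewrite sumr_const card_ord -[RHS]mulr_natl mul1r.
apply: ler_sum => i _.
rewrite (eq_bigr (fun b : {ffun 'I_n -> bool} => bern_prob x b * (((b i)%:R : R) - x ord0 i) ^+ 2)); last by move=> b _; rewrite mxE.
rewrite (@bern_marg _ _ x i (fun c => ((c%:R : R) - x ord0 i) ^+ 2)) /=.
have /andP[h0 h1] := hx i.
set a := x ord0 i.
have := sqr_ge0 (a - 1/2); nra.
Qed.

Lemma one_side (R : realType) (n : nat) (f : 'rV[R]_n -> R) (L2 t : R) (y z : 'rV[R]_n) :
  differentiable f y -> convex_on_box f -> in_box y -> in_box z -> 0 < t ->
  norm2 (grad f y) <= L2 -> 0 < L2 ->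
  f y - f z <= (t * \sum_(i < n) (y ord0 i - z ord0 i) ^+ 2 + L2 ^+ 2 / t) / 2.
Proof.
move=> df cf yb zb t0 hg hL.
have gi := grad_ineq df cf yb zb.
have e : 'd f y (y - z) = - 'd f y (z - y) by rewrite -linearN opprB.
have h1 : f y - f z <= 'd f y (y - z) by rewrite e; lra.
apply: (le_trans h1); rewrite diff_grad.
have hG : \sum_(i < n) grad f y ord0 i ^+ 2 <= L2 ^+ 2.
  have s0 : 0 <= \sum_(i < n) grad f y ord0 i ^+ 2 by apply: sumr_ge0 => i _; exact: sqr_ge0.
  rewrite -(sqr_sqrtr s0) lerXn2r // ?nnegrE ?sqrtr_ge0 ?(ltW hL) //.
apply: (@le_trans _ _ (\sum_(i < n) (t * (y ord0 i - z ord0 i) ^+ 2 + grad f y ord0 i ^+ 2 / t) / 2)).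
  apply: ler_sum => i _; rewrite !mxE; exact: amgm.
rewrite -mulr_suml big_split /= -mulr_sumr -mulr_suml.
have ti : 0 < t^-1 by rewrite invr_gt0.
have := ler_wpM2r (ltW ti) hG.
lra.
Qed.

Theorem lemma2 (R : realType) (n : nat) (f : 'rV[R]_n -> R) (L2 : R)
  (hL2 : 0 < L2)
  (hdiff : forall x : 'rV[R]_n, in_box x -> differentiable f x)
  (hconv : convex_on_box f)
  (hbdd : bounded_on_box f)
  (hgrad : forall x : 'rV[R]_n, in_box x -> norm2 (grad f x) <= L2)
  (x : 'rV[R]_n) (hx : in_box x) :
  expect_R x (fun xh => `|f xh - f x|) <= L2 * Num.sqrt (n%:R) / 2.
Proof.
case: n f hdiff hconv hbdd hgrad x hx => [|n] f hdiff hconv hbdd hgrad x hx.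
  rewrite /expect_R big1 ?sqrtr0 ?mulr0 ?mul0r // => b _.
  by rewrite (thinmx0 (outcome_vec b)) (thinmx0 x) subrr normr0 mulr0.
set s := Num.sqrt (n.+1%:R : R).
have s0 : 0 < s by rewrite sqrtr_gt0 ltr0n.
have ss : s ^+ 2 = n.+1%:R by rewrite sqr_sqrtr // ler0n.
set t := 2 * L2 / s.
have t0 : 0 < t by rewrite /t divr_gt0 // mulr_gt0.
pose Z (b : {ffun 'I_n.+1 -> bool}) :=
  \sum_(i < n.+1) ((outcome_vec b : 'rV[R]_n.+1) ord0 i - x ord0 i) ^+ 2.
have pw : forall b, `|f (outcome_vec b) - f x| <= (t * Z b + L2 ^+ 2 / t) / 2.
  move=> b; have ob := @outcome_box R _ b.
  rewrite ler_norml; apply/andP; split.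
    have := one_side (hdiff x hx) hconv hx ob t0 (hgrad x hx) hL2.
    have -> : \sum_(i < n.+1) (x ord0 i - (outcome_vec b : 'rV[R]_n.+1) ord0 i) ^+ 2 = Z b.
      by apply: eq_bigr => i _; rewrite -sqrrN opprB.
    lra.
  exact: one_side (hdiff _ ob) hconv ob hx t0 (hgrad _ ob) hL2.
apply: (@le_trans _ _ (\sum_b bern_prob x b * ((t * Z b + L2 ^+ 2 / t) / 2))).
  by apply: ler_sum => b _; apply: ler_wpM2l; [exact: bern_ge0|exact: pw].
have -> : \sum_b bern_prob x b * ((t * Z b + L2 ^+ 2 / t) / 2) =
   (t * (\sum_b bern_prob x b * Z b) + L2 ^+ 2 / t) / 2.
  rewrite (eq_bigr (fun b => (t * (bern_prob x b * Z b) + (L2 ^+ 2 / t) * bern_prob x b) / 2)); last first.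
    by move=> b _; ring.
  by rewrite -mulr_suml big_split /= -!mulr_sumr bern_sum1 mulr1.
have V := var_bound hx.
have := ler_wpM2l (ltW t0) V.
move=> h.
apply: (@le_trans _ _ ((t * (n.+1%:R / 4) + L2 ^+ 2 / t) / 2)); first lra.
have L0 : L2 != 0 by rewrite gt_eqF.
have sn0 : s != 0 by rewrite gt_eqF.
suff -> : (t * (n.+1%:R / 4) + L2 ^+ 2 / t) / 2 = L2 * s / 2 by [].
rewrite -ss /t; field.
by rewrite L0 sn0.
Qed.
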